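(* Let $G_\sigma$ be an ordered graph on $\{1,\dots,p\}$. The following are equivalent: (a) $G_\sigma$ satisfies Property-B; (b) for every $1\le k\le j\le i\le p$, $L_{ik}L_{jk}D_k$ can be expressed as a polynomial in the entries of $L_I$ and $\widetilde D$ (with negative powers allowed for entries of $\widetilde D$), and in every term of the expansion of $L_{ik}L_{jk}D_k$ the power of every entry of $\widetilde D$ is $0$, $1$ or $-1$.
   Context: $G_\sigma$ has edge set $E_\sigma$. For $\Omega$ symmetric positive definite with $\Omega_{ij}=0$ for $i\ne j$, $(i,j)\notin E_\sigma$, write $\Omega=LDL^T$ (modified Cholesky: $L$ unit lower triangular, $D=\mathrm{diag}(D_1,\dots,D_p)$), $\widetilde D_1=D_1$, $\widetilde D_k=D_k/D_{k-1}$, so $D_k=\prod_{l\le k}\widetilde D_l$. $L_I=\{L_{ij}:i>j,(i,j)\in E_\sigma\}$ are independent parameters; for $i>j$, $(i,j)\notin E_\sigma$, the relation $L_{ij}=-\sum_{k<j}L_{ik}L_{jk}\prod_{l=k+1}^j\widetilde D_l^{-1}$ applied recursively expresses $L_{ij}$ as a polynomial (its expansion, like terms collected) in $L_I$ and $\widetilde D_1^{-1},\dots,\widetilde D_p^{-1}$; $L_{kk}=1$. $G_\sigma$ has Property-B if for every $i>j$ with $(i,j)\notin E_\sigma$, every $\widetilde D_k$ appears in every term of the expansion of $L_{ij}$ with exponent $0$ or $-1$. *)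

(* Defs.v *)
From mathcomp Require Import all_boot all_order all_algebra.
Set Implicit Arguments. Unset Strict Implicit. Unset Printing Implicit Defensive.
Import Order.TTheory GRing.Theory Num.Theory.
Local Open Scope ring_scope.

(* Vertices 1..p of the ordered graph are represented by 'I_p (0-based),
   ordered by the natural order; E is the edge relation. *)

Section Laurent.
Variable p : nat.

(* A Laurent monomial in the variables L_{ab} (nonnegative exponents) and
   Dt_l (= \widetilde D_l, integer exponents). *)
Definition mono := ({ffun 'I_p * 'I_p -> nat} * {ffun 'I_p -> int})%type.

Definition mono1 : mono := ([ffun _ => 0%N], [ffun _ => 0]).
Definition monoM (a b : mono) : mono :=
  ([ffun ab => (a.1 ab + b.1 ab)%N], [ffun l => a.2 l + b.2 l]).

(* A formal (unexpanded) sum of integer-weighted monomials. *)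
Definition lpoly := seq (int * mono).

Definition lconst (c : int) : lpoly := [:: (c, mono1)].
Definition ladd (P Q : lpoly) : lpoly := P ++ Q.
Definition lopp (P : lpoly) : lpoly := [seq (- t.1, t.2) | t <- P].
Definition lmul (P Q : lpoly) : lpoly :=
  [seq (a.1 * b.1, monoM a.2 b.2) | a <- P, b <- Q].

Definition lX (i j : 'I_p) : lpoly :=
  [:: (1, ([ffun ab => nat_of_bool (ab == (i, j))], [ffun _ => 0]))].
Definition lD (l : 'I_p) (e : int) : lpoly :=
  [:: (1, ([ffun _ => 0%N], [ffun l' => if l' == l then e else 0]))].

Definition lcoef (P : lpoly) (m : mono) : int :=
  \sum_(t <- P | t.2 == m) t.1.

Definition is_term (P : lpoly) (m : mono) : bool := lcoef P m != 0.

Variable E : rel 'I_p.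

(* L_{ij} with fuel: L_ii = 1, L_ij = 0 for i < j, L_ij = variable for edges
   i > j, and for non-edges i > j the recursive relation
   L_ij = - sum_{k<j} L_ik L_jk prod_{l=k+1}^{j} Dt_l^{-1}. *)
Fixpoint Lfuel (n : nat) (i j : 'I_p) : lpoly :=
  match n with
  | 0%N => [::]
  | n'.+1 =>
    if i == j then lconst 1
    else if (j < i)%N then
      (if E i j then lX i j
       else lopp (\big[ladd/[::]]_(k : 'I_p | (k < j)%N)
              lmul (lmul (Lfuel n' i k) (Lfuel n' j k))
                   (\big[lmul/lconst 1]_(l : 'I_p | (k < l <= j)%N) lD l (-1))))
    else [::]
  end.

(* Sufficient fuel: j.+1 *)
Definition Lent (i j : 'I_p) : lpoly := Lfuel (nat_of_ord j).+1 i j.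

Definition Dent (k : 'I_p) : lpoly :=
  \big[lmul/lconst 1]_(l : 'I_p | (l <= k)%N) lD l 1.

Definition PropertyB : Prop :=
  forall i j : 'I_p, (j < i)%N -> ~~ E i j ->
  forall m : mono, is_term (Lent i j) m ->
  forall l : 'I_p, (m.2 l == 0) || (m.2 l == -1).

Definition PropertyLLD : Prop :=
  forall i j k : 'I_p, (k <= j)%N -> (j <= i)%N ->
  forall m : mono, is_term (lmul (lmul (Lent i k) (Lent j k)) (Dent k)) m ->
  forall l : 'I_p, [|| m.2 l == 0, m.2 l == 1 | m.2 l == -1].

End Laurent.

(* Main.v *)
Require Import Defs.
From mathcomp Require Import all_boot all_order all_algebra.
From mathcomp Require Import zify.
Set Implicit Arguments. Unset Strict Implicit. Unset Printing Implicit Defensive.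
Import Order.TTheory GRing.Theory Num.Theory.
Local Open Scope ring_scope.

Section Aux.
Variable p : nat.
Implicit Types (P Q : lpoly p) (m u v w a d : mono p).

Lemma monoM1 u v ab : (monoM u v).1 ab = (u.1 ab + v.1 ab)%N.
Proof. by rewrite ffunE. Qed.
Lemma monoM2 u v l : (monoM u v).2 l = u.2 l + v.2 l.
Proof. by rewrite ffunE. Qed.

Lemma monoMC u v : monoM u v = monoM v u.
Proof.
rewrite /monoM; congr (_,_); apply/ffunP => x; rewrite !ffunE.
  by rewrite addnC. by rewrite addrC.
Qed.

Lemma monoM_inj w u v : monoM u w = monoM v w -> u = v.
Proof.
case: u v => [u1 u2] [v1 v2] [] /ffunP H1 /ffunP H2.
congr (_,_); apply/ffunP => x; [move: (H1 x) | move: (H2 x)]; rewrite !ffunE /=; lia.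
Qed.

Lemma lcoef_nil m : lcoef ([::] : lpoly p) m = 0.
Proof. by rewrite /lcoef big_nil. Qed.

Lemma lcoef_cons x P m : lcoef (x :: P) m = (if x.2 == m then x.1 else 0) + lcoef P m.
Proof. by rewrite /lcoef big_cons; case: ifP; rewrite ?add0r. Qed.

Lemma term_appears P m : is_term P m -> m \in map snd P.
Proof.
rewrite /is_term; elim: P => [|x P IH]; first by rewrite lcoef_nil eqxx.
rewrite lcoef_cons /= in_cons; case: (x.2 =P m) => [->|_]; first by rewrite eqxx.
by rewrite add0r => /IH ->; rewrite orbT.
Qed.

Lemma group P (F : mono p -> int) :
  \sum_(x <- P) x.1 * F x.2 = \sum_(u <- undup (map snd P)) lcoef P u * F u.
Proof.
elim: P => [|x P IH]; first by rewrite !big_nil.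
rewrite big_cons IH /=.
have E1 : forall U, \sum_(u <- U) lcoef (x :: P) u * F u =
   \sum_(u <- U) (if x.2 == u then x.1 else 0) * F u + \sum_(u <- U) lcoef P u * F u.
  by move=> U; rewrite -big_split /=; apply: eq_bigr => u _; rewrite lcoef_cons mulrDl.
case: ifP => hx.
  rewrite E1; congr (_ + _); rewrite [RHS](bigD1_seq x.2) ?undup_uniq ?mem_undup //= eqxx big1 ?addr0 // => u.
  by rewrite eq_sym => /negbTE ->; rewrite mul0r.
rewrite big_cons E1 lcoef_cons eqxx.
have -> : lcoef P x.2 = 0.
  by apply/eqP; apply/negP => /negP h; move: (term_appears h); rewrite hx.
have Z : \sum_(u <- undup (map snd P)) (if x.2 == u then x.1 else 0) * F u = 0.
  rewrite big_seq big1 // => u.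
  rewrite mem_undup => hu; case: eqP => [e|]; last by rewrite mul0r.
  by move: hx; rewrite e hu.
by rewrite addr0 Z add0r.
Qed.

Definition hc Q u m := \sum_(y <- Q | monoM u y.2 == m) y.1.

Lemma lcoef_mul P Q m :
  lcoef (lmul P Q) m = \sum_(u <- undup (map snd P)) lcoef P u * hc Q u m.
Proof.
rewrite /lcoef big_mkcond /lmul big_allpairs_dep /= -group.
apply: eq_bigr => x _; rewrite /hc big_distrr /= [RHS]big_mkcond //.
Qed.

Lemma hc_eq Q u v : hc Q u (monoM u v) = lcoef Q v.
Proof.
rewrite /hc /lcoef; apply: eq_bigl => y; apply/eqP/eqP => [|->] //.
by rewrite !(monoMC u); apply: monoM_inj.
Qed.

Lemma hc_ex Q u m : hc Q u m != 0 -> exists v, m = monoM u v.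
Proof.
move=> H; have: has (fun y => monoM u y.2 == m) Q.
  by apply/negPn/negP => /(big_hasC 0 +%R (fun y : int * mono p => y.1)) h; rewrite /hc h eqxx in H.
by case/hasP => y _ /eqP <-; exists y.2.
Qed.

Lemma is_term_mul P Q m : is_term (lmul P Q) m ->
  exists u v, [/\ is_term P u, is_term Q v & m = monoM u v].
Proof.
rewrite /is_term lcoef_mul => H.
case: (boolP (has (fun u => lcoef P u * hc Q u m != 0) (undup (map snd P)))) => [/hasP [u _ Hu]|Hn].
  move: Hu; rewrite mulf_eq0 negb_or => /andP [h1 h2].
  have [v ev] := hc_ex h2; rewrite ev hc_eq in h2.
  by exists u, v.
move: H; rewrite big1_seq ?eqxx // => u /andP [_ hu].
by move/hasPn: Hn => /(_ u hu) /negPn /eqP.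
Qed.

Lemma lmul1 Q d : lmul Q [:: (1, d)] = [seq (x.1, monoM x.2 d) | x <- Q].
Proof. elim: Q => [|x Q IH] //. rewrite /lmul /= in IH *. by rewrite mulr1 IH. Qed.

Lemma lcoef_mul1 Q d u : lcoef (lmul Q [:: (1, d)]) (monoM u d) = lcoef Q u.
Proof.
rewrite lmul1 /lcoef big_map; apply: eq_bigl => y /=; apply/eqP/eqP => [|->] //.
exact: monoM_inj.
Qed.

Lemma is_term_mul1 Q d m : is_term (lmul Q [:: (1, d)]) m ->
  exists u, is_term Q u /\ m = monoM u d.
Proof.
rewrite lmul1 /is_term /lcoef big_map /= => H.
have: has (fun y => monoM y.2 d == m) Q.
  by apply/negPn/negP => /(big_hasC 0 +%R (fun y : int * mono p => y.1)) h; rewrite h eqxx in H.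
case/hasP => y _ /eqP e; exists y.2; split; last by rewrite e.
subst m; have := lcoef_mul1 Q d y.2; rewrite lmul1 /is_term /lcoef big_map /= => <-; exact H.
Qed.

Lemma lcoef_sq P a : is_term P a ->
  (forall u v, is_term P u -> is_term P v -> monoM u v = monoM a a -> u = a) ->
  lcoef (lmul P P) (monoM a a) = lcoef P a * lcoef P a.
Proof.
move=> Ha ext.
rewrite lcoef_mul (bigD1_seq a) ?undup_uniq ?mem_undup ?term_appears //= hc_eq.
rewrite big1_seq ?addr0 // => u /andP [nua _].
case: (eqVneq (lcoef P u) 0) => [->|nu]; first by rewrite mul0r.
case: (eqVneq (hc P u (monoM a a)) 0) => [->|nh]; first by rewrite mulr0.
have [v ev] := hc_ex nh; rewrite ev hc_eq in nh.
by move: nua; rewrite (ext u v nu nh (esym ev)) eqxx.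
Qed.


Fixpoint lexlt (cs : seq (mono p -> int)) u v : bool :=
  if cs is c :: cs' then (c u < c v) || ((c u == c v) && lexlt cs' u v) else false.

Lemma lex_irr cs u : ~~ lexlt cs u u.
Proof. by elim: cs => //= c cs IH; rewrite ltxx eqxx. Qed.

Lemma lex_trans cs u v w : lexlt cs u v -> lexlt cs v w -> lexlt cs u w.
Proof.
elim: cs => //= c cs IH /orP [h|/andP [/eqP e h]] /orP [h'|/andP [/eqP e' h']].
- by rewrite (lt_trans h h').
- by rewrite -e' h.
- by rewrite e h'.
- by rewrite e e' eqxx (IH h h') orbT.
Qed.

Lemma lex_tri cs u v : [|| lexlt cs u v, lexlt cs v u | all (fun c => c u == c v) cs].
Proof.
elim: cs => //= c cs IH; case: (ltgtP (c u) (c v)) => h //=.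
Qed.

Definition additive (c : mono p -> int) := forall x y, c (monoM x y) = c x + c y.
Fixpoint all_add (cs : seq (mono p -> int)) : Prop :=
  if cs is c :: cs' then additive c /\ all_add cs' else True.

Lemma all_add_cat cs1 cs2 : all_add cs1 -> all_add cs2 -> all_add (cs1 ++ cs2).
Proof. by elim: cs1 => //= c cs IH [h1 h2] h3; split => //; apply: IH. Qed.

Lemma all_add_map (T : Type) (f : T -> mono p -> int) s :
  (forall x, additive (f x)) -> all_add (map f s).
Proof. by move=> H; elim: s => //= x s IH; split. Qed.

Lemma lex_add cs w : all_add cs -> forall u v,
  lexlt cs (monoM u w) (monoM v w) = lexlt cs u v.
Proof.
elim: cs => //= c cs IH [hc hcs] u v; rewrite !hc IH //.
have -> : (c u + c w < c v + c w) = (c u < c v) by lia.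
by have -> : (c u + c w == c v + c w) = (c u == c v) by lia.
Qed.

Lemma lex_max cs (sep : forall u v, all (fun c => c u == c v) cs -> u = v)
  (S : seq (mono p)) : S != [::] ->
  exists2 a, a \in S & forall b, b \in S -> b != a -> lexlt cs b a.
Proof.
elim: S => //= x S IH _.
case: (eqVneq S [::]) => [->|nS].
  by exists x; rewrite ?mem_head // => b; rewrite inE => /eqP ->; rewrite eqxx.
have [a aS amax] := IH nS.
case: (eqVneq x a) => [->|nxa].
  exists a; first by rewrite mem_head.
  move=> b; rewrite inE => /orP [/eqP -> |]; first by rewrite eqxx.
  exact: amax.
have := lex_tri cs x a; case/or3P => [h|h|h].
- exists a; first by rewrite inE aS orbT.
  move=> b; rewrite inE => /orP [/eqP -> //|]; exact: amax.
- exists x; first by rewrite mem_head.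
  move=> b; rewrite inE => /orP [/eqP -> |bS]; first by rewrite eqxx.
  case: (eqVneq b a) => [-> //|nba] _.
  exact: lex_trans (amax b bS nba) h.
- by move: nxa; rewrite (sep _ _ h) eqxx.
Qed.

Definition cs (s : int) (l : 'I_p) : seq (mono p -> int) :=
  (fun u : mono p => s * u.2 l) ::
   ([seq (fun u : mono p => u.2 l') | l' <- index_enum 'I_p] ++
    [seq (fun u : mono p => Posz (u.1 ab)) | ab <- index_enum ('I_p * 'I_p)%type]).

Lemma cs_add s l : all_add (cs s l).
Proof.
split; first by move=> x y; rewrite monoM2 mulrDr.
apply: all_add_cat; apply: all_add_map => z x y; rewrite ?monoM2 ?monoM1 //.
Qed.

Lemma cs_sep s l u v : all (fun c => c u == c v) (cs s l) -> u = v.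
Proof.
rewrite /= all_cat !all_map => /andP [_ /andP [/allP h1 /allP h2]].
case: u v h1 h2 => [u1 u2] [v1 v2] /= h1 h2.
congr (_,_); apply/ffunP => z.
  by move: (h2 z (mem_index_enum z)) => /= /eqP [].
by move: (h1 z (mem_index_enum z)) => /= /eqP.
Qed.

Lemma bigD (r : seq 'I_p) (Qp : pred 'I_p) e : uniq r ->
  \big[@lmul p/lconst p 1]_(l <- r | Qp l) lD l e =
  [:: (1, ([ffun _ => 0%N], [ffun l => if (l \in r) && Qp l then e else 0]))].
Proof.
elim: r => [|x r IH] /=; first by rewrite big_nil /lconst /mono1.
move=> /andP [xr ur]; rewrite big_cons IH //.
case: ifP => hx.
  rewrite /lmul /= mulr1; congr [:: (_, (_,_))]; apply/ffunP => z; rewrite !ffunE //.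
  rewrite inE; case: (eqVneq z x) => [->|nzx] /=; first by rewrite (negbTE xr) hx addr0.
  by rewrite add0r.
congr [:: (_, (_,_))]; apply/ffunP => z; rewrite !ffunE inE.
by case: (eqVneq z x) => [->|] /=; rewrite ?(negbTE xr) ?hx.
Qed.

Lemma appears_ladd (I : Type) (r : seq I) (Pk : pred I) (F : I -> lpoly p) m :
  m \in map snd (\big[@ladd p/[::]]_(k <- r | Pk k) F k) ->
  exists k, Pk k /\ m \in map snd (F k).
Proof.
apply: (big_ind (fun L => m \in map snd L -> exists k, Pk k /\ m \in map snd (F k))) => //.
  by move=> x y hx hy; rewrite /ladd map_cat mem_cat => /orP [/hx|/hy].
by move=> k hk h; exists k.
Qed.

Lemma appears_lmul P Q m : m \in map snd (lmul P Q) ->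
  exists x y, [/\ x \in map snd P, y \in map snd Q & m = monoM x y].
Proof.
case/mapP => t /allpairsP [[a b] /= [ha hb ->]] ->.
by exists a.2, b.2; rewrite !map_f.
Qed.

Lemma appears_lopp P m : m \in map snd (lopp P) = (m \in map snd P).
Proof. by rewrite /lopp -map_comp. Qed.

End Aux.

Lemma Lfuel_zero p (E : rel 'I_p) n i j m : m \in map snd (Lfuel E n i j) ->
  forall l : 'I_p, (j < l)%N -> m.2 l = 0.
Proof.
elim: n i j m => [//|n IH] i j m /=.
case: eqP => [_|_].
  by rewrite inE => /eqP -> l _; rewrite ffunE.
case: ifP => hji; last by [].
case: ifP => hE.
  by rewrite inE => /eqP -> l _; rewrite ffunE.
rewrite appears_lopp => /appears_ladd [k [hk]].
case/appears_lmul => xy [z [/appears_lmul [x [y [hx hy ->]]] hz ->]] l hl.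
move: hz; rewrite bigD ?index_enum_uniq // inE => /eqP -> /=.
rewrite !ffunE (IH _ _ _ hx) ?(IH _ _ _ hy) /=; try lia.
case: ifP => //; lia.
Qed.

Theorem lemma5 (p : nat) (E : rel 'I_p) (Esym : symmetric E) (Eirr : irreflexive E) :
  PropertyB E <-> PropertyLLD E.
Proof.
split.
- move=> HB i j k hkj hji m Hm l.
  move: Hm; rewrite /Dent bigD ?index_enum_uniq // => /is_term_mul1 [u [Hu ->]].
  case: (is_term_mul Hu) => x [y [Hx Hy ->]].
  rewrite !monoM2 ffunE mem_index_enum /=.
  have F0 : forall (i' : 'I_p) x, is_term (Lent E i' k) x -> (k < l)%N -> x.2 l = 0.
    by move=> i' x' /term_appears h hl; apply: (Lfuel_zero h).
  have F1 : forall (i' : 'I_p) x, (k <= i')%N -> is_term (Lent E i' k) x ->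
      (x.2 l == 0) || (x.2 l == -1).
    move=> i' x' hki; case: (eqVneq i' k) => [->|nik].
      rewrite /Lent /= eqxx => /term_appears; rewrite inE => /eqP ->.
      by rewrite ffunE eqxx.
    have hk : (k < i')%N by rewrite ltn_neqAle hki andbT; apply/eqP => e; move/eqP: nik; apply; apply: val_inj.
    case: (boolP (E i' k)) => hE.
      rewrite /Lent /= (negbTE nik) hk hE => /term_appears; rewrite inE => /eqP ->.
      by rewrite ffunE eqxx.
    by move=> h; exact: (HB i' k hk hE x' h l).
  case: (leqP l k) => hl.
    have := F1 i x (leq_trans hkj hji) Hx; have := F1 j y hkj Hy; lia.
  by rewrite (F0 i x Hx hl) (F0 j y Hy hl); lia.
- move=> HL i j hji hE m Hm l; apply/negPn/negP => Hbad.
  set P := Lent E i j in Hm.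
  pose s : int := if m.2 l < 0 then -1 else 1.
  pose S := [seq u <- undup (map snd P) | is_term P u].
  have mS : m \in S by rewrite mem_filter Hm mem_undup term_appears.
  have nS : S != [::] by apply/eqP => e; rewrite e in mS.
  have [a aS amax] := lex_max (@cs_sep p s l) nS.
  have Ha : is_term P a by move: aS; rewrite mem_filter => /andP [].
  have abad : ~~ ((a.2 l == 0) || (a.2 l == -1)).
    case: (eqVneq m a) => [<- //| nma].
    have := amax m mS nma; rewrite /= => h.
    have h1 : s * m.2 l <= s * a.2 l.
      by case/orP: h => [/ltW //| /andP [/eqP -> _]].
    move: h1 Hbad; rewrite /s; case: ifP => hm; rewrite ?mulN1r ?mul1r.
1,2: set xx := m.2 l; set yy := a.2 l; clear -hm; lia.
  have ext : forall u v, is_term P u -> is_term P v -> monoM u v = monoM a a -> u = a.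
    move=> u v Hu Hv e; case: (eqVneq u a) => // nua.
    have nva : v != a.
      by apply/negP => /eqP eva; subst v; move: nua; rewrite (monoM_inj e) eqxx.
    have uS : u \in S by rewrite mem_filter Hu mem_undup term_appears.
    have vS : v \in S by rewrite mem_filter Hv mem_undup term_appears.
    have h3 : lexlt (cs s l) (monoM u v) (monoM a v) by rewrite lex_add; [apply: amax | apply: cs_add].
    have h4 : lexlt (cs s l) (monoM a v) (monoM a a).
      by rewrite (monoMC a v) lex_add; [apply: amax | apply: cs_add].
    by have := lex_trans h3 h4; rewrite e (negbTE (lex_irr _ _)).
  have sq : lcoef (lmul P P) (monoM a a) != 0.
    by rewrite (lcoef_sq Ha ext) mulf_neq0.
  pose dj : mono p := ([ffun _ => 0%N], [ffun l' => if (l' \in index_enum 'I_p) && (l' <= j)%N then 1 else 0]).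
  have T : is_term (lmul (lmul (Lent E i j) (Lent E i j)) (Dent j)) (monoM (monoM a a) dj).
    by rewrite /Dent bigD ?index_enum_uniq // /is_term lcoef_mul1.
  have := HL i i j (ltnW hji) (leqnn i) _ T l.
  rewrite !monoM2 ffunE mem_index_enum /=.
  case: ifP => _; set yy := a.2 l; clear -abad; lia.
Qed.
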